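(* Let $\lambda\in\Delta([2])$ be a prior over the binary state space $[2]$, let $\pi:[2]\to\Delta(\Sigma)$ be a signaling scheme with finite signal space $\Sigma$, and let $\mu$ be the distribution of posterior beliefs induced by $\pi$. Then there exist a positive integer $K$ and signaling schemes $\pi^{(1)},\dots,\pi^{(K)}$, each of the form $\pi^{(k)}:[2]\to\Delta(\{0,1\})$ (binary signal space), with induced distributions of posterior beliefs $\mu^{(k)}$, and a distribution $F$ over $[K]$, such that for every posterior belief $x\in\mathrm{supp}(\mu)$, $$\Pr[\mu=x]=\mathbb{E}_{k\sim F}\big[\Pr[\mu^{(k)}=x]\big].$$
   Context: For a signaling scheme $\pi$ with signal space $\Sigma$, when the state $\theta\sim\lambda$ and the signal $\sigma\sim\pi(\theta,\cdot)$ are drawn, the posterior belief is $x(\sigma)\in\Delta([2])$ with $x(\sigma)(i)=\lambda(i)\pi(i,\sigma)/\sum_j\lambda(j)\pi(j,\sigma)$; the induced distribution of posterior beliefs $\mu$ is the distribution of the random variable $x(\sigma)$, and $\Pr[\mu=x]$ denotes the probability that the realized posterior equals $x$. *)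

(* Defs.v *)
From HB Require Import structures.
From mathcomp Require Import all_boot all_order all_algebra.
Set Implicit Arguments. Unset Strict Implicit. Unset Printing Implicit Defensive.
Import Order.TTheory GRing.Theory Num.Theory.
Local Open Scope ring_scope.

Section Persuasion.
Variable R : realFieldType.

Definition is_dist (T : finType) (p : T -> R) : Prop :=
  (forall t, 0 <= p t) /\ \sum_(t : T) p t = 1.

Definition is_scheme (S : finType) (pi : 'I_2 -> S -> R) : Prop :=
  forall i, is_dist (pi i).

Definition sig_prob (S : finType) (lam : 'I_2 -> R) (pi : 'I_2 -> S -> R) (s : S) : R :=
  \sum_(j < 2) lam j * pi j s.

Definition posterior (S : finType) (lam : 'I_2 -> R) (pi : 'I_2 -> S -> R) (s : S)
  : {ffun 'I_2 -> R} :=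
  [ffun i => lam i * pi i s / sig_prob lam pi s].

(* Pr[mu = x]: total probability of (realizable) signals whose posterior is x *)
Definition post_prob (S : finType) (lam : 'I_2 -> R) (pi : 'I_2 -> S -> R)
  (x : {ffun 'I_2 -> R}) : R :=
  \sum_(s : S | (sig_prob lam pi s != 0) && (posterior lam pi s == x)) sig_prob lam pi s.

Definition in_supp (S : finType) (lam : 'I_2 -> R) (pi : 'I_2 -> S -> R)
  (x : {ffun 'I_2 -> R}) : Prop :=
  0 < post_prob lam pi x.

End Persuasion.

(* Main.v *)
Require Import Defs.
From HB Require Import structures.
From mathcomp Require Import all_boot all_order all_algebra.
From mathcomp Require Import ring lra.
Import Order.TTheory GRing.Theory Num.Theory.
Local Open Scope ring_scope.

Lemma sum_enum_val (R : realFieldType) (I : finType) (h : I -> R) :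
  \sum_(k < #|I|) h (enum_val k) = \sum_(i : I) h i.
Proof.
symmetry; apply: (reindex (fun k : 'I_#|I| => enum_val k)).
by apply: onW_bij; exact: enum_val_bij.
Qed.

Lemma reduce (R : realFieldType) (lam : 'I_2 -> R) (S : finType)
  (pi : 'I_2 -> S -> R) (I : finType) (pis : I -> 'I_2 -> 'I_2 -> R) (F : I -> R) :
  (forall k, is_scheme (pis k)) -> is_dist F ->
  (forall x, post_prob lam pi x = \sum_(k : I) F k * post_prob lam (pis k) x) ->
  exists (K : nat) (pis : 'I_K -> 'I_2 -> 'I_2 -> R) (F : 'I_K -> R),
    (0 < K)%N /\
    (forall k, is_scheme (pis k)) /\
    is_dist F /\
    (forall x : {ffun 'I_2 -> R}, in_supp lam pi x ->
       post_prob lam pi x = \sum_(k < K) F k * post_prob lam (pis k) x).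
Proof.
move=> hs [F0 F1] hx.
exists #|I|, (fun k => pis (enum_val k)), (fun k => F (enum_val k)).
split; last split; last split.
- rewrite lt0n; apply/negP => /eqP h0.
  move: F1; rewrite -sum_enum_val.
  move: (enum_val (T:=I)); rewrite h0 => f; rewrite big_ord0 => /eqP.
  by rewrite eq_sym oner_eq0.
- by move=> k; apply: hs.
- by split => [k|]; [apply: F0 | rewrite sum_enum_val].
- move=> x _; rewrite hx.
  by rewrite (@sum_enum_val _ _ (fun k => F k * post_prob lam (pis k) x)).
Qed.

Lemma key (R : realFieldType) (l0 A0 A1 B0 B1 qA qB tA tB : R) :
  qA = l0 * A0 + (1 - l0) * A1 -> qB = l0 * B0 + (1 - l0) * B1 ->
  tA = l0 * A0 / qA -> tB = l0 * B0 / qB ->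
  l0 != 0 -> 1 - l0 != 0 -> qA != 0 -> qB != 0 -> tA != tB ->
  let a := (tB - l0) / ((tB - l0) - (tA - l0)) in
  a * A0 / qA + (1 - a) * B0 / qB = 1 /\ a * A1 / qA + (1 - a) * B1 / qB = 1.
Proof.
move=> eA eB etA etB h0 h1 hA hB hAB a.
have hd : (tB - l0) - (tA - l0) != 0.
  by rewrite subr_eq0; apply: contra hAB => /eqP h; apply/eqP; lra.
have hd' : l0 * B0 * qA - l0 * A0 * qB != 0.
  have -> : l0 * B0 * qA - l0 * A0 * qB = qA * qB * ((tB - l0) - (tA - l0)).
    by rewrite etA etB; field; rewrite hA hB.
  by rewrite !mulf_eq0 !negb_or hA hB hd.
rewrite /a etA etB; subst qA qB; split; field; rewrite ?h0 ?h1 ?hA ?hB /=.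
all: by apply: contra hd' => /eqP h; apply/eqP; rewrite -h; ring.
Qed.

Lemma sum2 (R : realFieldType) (f : 'I_2 -> R) : \sum_(j < 2) f j = f ord0 + f ord_max.
Proof. by rewrite big_ord_recr big_ord1; congr (f _ + _); apply: val_inj. Qed.

Section Main.
Variables (R : realFieldType) (lam : 'I_2 -> R) (S : finType) (pi : 'I_2 -> S -> R).
Hypotheses (Hlam : is_dist lam) (Hpi : is_scheme pi).

Definition q s := sig_prob lam pi s.
Definition t s := posterior lam pi s ord0.
Definition p := lam ord0.
Definition d s := t s - p.
Definition low s := (q s != 0) && (t s < p).
Definition high s := (q s != 0) && (p < t s).
Definition mid s := (q s != 0) && (t s == p).

Lemma lam_ge0 i : 0 <= lam i. Proof. by case: Hlam. Qed.
Lemma pi_ge0 i s : 0 <= pi i s. Proof. by case: (Hpi i). Qed.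
Lemma lam1 : lam ord_max = 1 - p.
Proof. case: Hlam => _; rewrite sum2 /p => <-; ring. Qed.
Lemma qE s : q s = lam ord0 * pi ord0 s + lam ord_max * pi ord_max s.
Proof. by rewrite /q /sig_prob sum2. Qed.
Lemma q_ge0 s : 0 <= q s.
Proof. by rewrite qE addr_ge0 // mulr_ge0 // ?lam_ge0 ?pi_ge0. Qed.
Lemma sum_q : \sum_s q s = 1.
Proof.
rewrite /q /sig_prob exchange_big /=.
case: Hlam => _ <-; apply: eq_bigr => j _.
by rewrite -mulr_sumr; case: (Hpi j) => _ ->; rewrite mulr1.
Qed.
Lemma tE s : t s = lam ord0 * pi ord0 s / q s.
Proof. by rewrite /t /posterior ffunE. Qed.
Lemma qt s : q s * t s = lam ord0 * pi ord0 s.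
Proof.
have [hq0|hq] := eqVneq (q s) 0.
  rewrite hq0.
  have h1 := mulr_ge0 (lam_ge0 ord0) (pi_ge0 ord0 s).
  have h2 := mulr_ge0 (lam_ge0 ord_max) (pi_ge0 ord_max s).
  have := qE s; move: h1 h2; rewrite mul0r hq0.
  lra.
by rewrite tE; field.
Qed.
Lemma mean : \sum_s q s * d s = 0.
Proof.
under eq_bigr => s _ do rewrite /d mulrBr qt.
rewrite sumrB -mulr_suml sum_q mul1r -mulr_sumr.
by case: (Hpi ord0) => _ ->; rewrite mulr1 /p subrr.
Qed.
Lemma post1 s : q s != 0 -> posterior lam pi s ord_max = 1 - t s.
Proof.
move=> hq; rewrite tE /posterior ffunE -/(q s) qE.
move: hq; rewrite qE => hq; by field.
Qed.


Lemma ord2_cases (i : 'I_2) : i = ord0 \/ i = ord_max.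
Proof. by case: i => [[|[|//]]] Hi; [left|right]; apply: val_inj. Qed.

Lemma t_ge0 s : 0 <= t s.
Proof. by rewrite tE divr_ge0 ?q_ge0 // mulr_ge0 ?lam_ge0 ?pi_ge0. Qed.
Lemma t_le1 s : t s <= 1.
Proof.
have [hq0|hq] := eqVneq (q s) 0; first by rewrite tE hq0 invr0 mulr0.
have hqp : 0 < q s by rewrite lt_def hq q_ge0.
have h := qt s.
have h2 := mulr_ge0 (lam_ge0 ord_max) (pi_ge0 ord_max s).
have := qE s. nra.
Qed.

Definition D := \sum_s (if high s then q s * d s else 0).

Lemma le_sum1 (f : S -> R) s : (forall s, 0 <= f s) -> f s <= \sum_s f s.
Proof.
move=> h; rewrite (bigD1 s) //= lerDl; apply: sumr_ge0 => *; exact: h.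
Qed.

Lemma split3 (f : S -> R) s : (q s = 0 -> f s = 0) ->
  f s = (if mid s then f s else 0) + (if low s then f s else 0) + (if high s then f s else 0).
Proof.
rewrite /mid /low /high; have [hq0|hq] := eqVneq (q s) 0 => /= h.
  by rewrite h // !addr0.
by case: ltgtP => _; rewrite ?addr0 ?add0r.
Qed.

Lemma lowsum : \sum_s (if low s then q s * - d s else 0) = D.
Proof.
have h : \sum_s q s * d s = \sum_s (if low s then q s * d s else 0) + D.
  rewrite /D -big_split; apply: eq_bigr => s _ /=.
  rewrite /low /high /d; have [->|hq] := eqVneq (q s) 0; first by rewrite /= mul0r addr0.
  by case: ltgtP => h /=; rewrite ?addr0 ?add0r // h subrr mulr0.
move: h; rewrite mean => /eqP; rewrite eq_sym addr_eq0 => /eqP h.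
rewrite -[D]opprK -h -sumrN; apply: eq_bigr => s _.
by case: (low s); rewrite ?mulrN ?oppr0.
Qed.

Lemma D_ge0 : 0 <= D.
Proof.
apply: sumr_ge0 => s _; case hh: (high s) => //.
move: hh; rewrite /high /d => /andP[_ h]; rewrite mulr_ge0 ?q_ge0 //; lra.
Qed.

Lemma high_D s : high s -> 0 < D.
Proof.
move=> hh; apply: (lt_le_trans _ (le_sum1 (fun s => if high s then q s * d s else 0) s _)).
  rewrite hh; move: hh; rewrite /high /d => /andP[hq h].
  rewrite mulr_gt0 // ?subr_gt0 // lt_def hq q_ge0 //.
move=> s'; case hh': (high s') => //.
move: hh'; rewrite /high /d => /andP[_ h]; rewrite mulr_ge0 ?q_ge0 //; lra.
Qed.

Lemma low_D s : low s -> 0 < D.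
Proof.
move=> hl; rewrite -lowsum.
apply: (lt_le_trans _ (le_sum1 (fun s => if low s then q s * - d s else 0) s _)).
  rewrite hl; move: hl; rewrite /low /d => /andP[hq h].
  rewrite mulr_gt0 // ?oppr_gt0 ?subr_lt0 // lt_def hq q_ge0 //.
move=> s'; case hh': (low s') => //.
move: hh'; rewrite /low /d => /andP[_ h]; rewrite mulr_ge0 ?q_ge0 //; lra.
Qed.


Definition a s s' := d s' / (d s' - d s).
Definition bin s s' : 'I_2 -> 'I_2 -> R := fun i b =>
  if b == ord0 then a s s' * pi i s / q s else (1 - a s s') * pi i s' / q s'.
Definition triv : 'I_2 -> 'I_2 -> R := fun i b => if b == ord0 then 1 else 0.

Lemma ordmax_neq0 : ((ord_max : 'I_2) == ord0) = false.
Proof. by []. Qed.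

Lemma lh_facts s s' : low s -> high s' ->
  [/\ 0 < q s, 0 < q s', d s < 0, 0 < d s' & 0 < a s s' /\ 0 < 1 - a s s'].
Proof.
rewrite /low /high => /andP[hq h] /andP[hq' h'].
have q1 : 0 < q s by rewrite lt_def hq q_ge0.
have q2 : 0 < q s' by rewrite lt_def hq' q_ge0.
have d1 : d s < 0 by rewrite /d subr_lt0.
have d2 : 0 < d s' by rewrite /d subr_gt0.
have dd : 0 < d s' - d s by rewrite subr_gt0 (lt_trans d1 d2).
split => //; rewrite /a; split; first by rewrite divr_gt0.
have -> : 1 - d s' / (d s' - d s) = - d s / (d s' - d s).
  by field; rewrite gt_eqF.
by rewrite divr_gt0 // oppr_gt0.
Qed.

Lemma bin_scheme s s' : low s -> high s' -> is_scheme (bin s s').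
Proof.
move=> hl hh; have [q1 q2 d1 d2 [a1 a2]] := lh_facts s s' hl hh.
move: (hl) (hh); rewrite /low /high => /andP[hq h] /andP[hq' h'].
have l0 : p != 0 by rewrite gt_eqF // (le_lt_trans (t_ge0 s) h).
have l1 : 1 - p != 0 by rewrite subr_eq0 eq_sym lt_eqF // (lt_le_trans h' (t_le1 s')).
have hAB : t s != t s' by apply: contraTneq h => ->; rewrite -leNgt ltW.
have qE' x : q x = p * pi ord0 x + (1 - p) * pi ord_max x by rewrite qE lam1.
have [k0 k1] := @key R p _ _ _ _ _ _ _ _ (qE' s) (qE' s') (tE s) (tE s') l0 l1 hq hq' hAB.
move=> i; split.
  move=> b; rewrite /bin; case: (b == ord0);
  (apply: divr_ge0; [apply: mulr_ge0; [exact: ltW | exact: pi_ge0] | exact: q_ge0]).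
rewrite sum2 /bin eqxx ordmax_neq0.
have ea : a s s' = (t s' - p) / ((t s' - p) - (t s - p)) by [].
by case: (ord2_cases i) => ->; rewrite ea.
Qed.


Lemma triv_scheme : is_scheme triv.
Proof.
move=> i; split; first by move=> b; rewrite /triv; case: (b == ord0).
by rewrite sum2 /triv eqxx ordmax_neq0 addr0.
Qed.

Definition G (x : {ffun 'I_2 -> R}) s : R :=
  if (q s != 0) && (posterior lam pi s == x) then 1 else 0.

Lemma post_pi x : post_prob lam pi x = \sum_s q s * G x s.
Proof.
rewrite /post_prob big_mkcond; apply: eq_bigr => s _.
by rewrite /G -/(q s); case: (_ && _); rewrite ?mulr1 ?mulr0.
Qed.

Lemma post2 (pp : 'I_2 -> 'I_2 -> R) x : post_prob lam pp x =
  (if (sig_prob lam pp ord0 != 0) && (posterior lam pp ord0 == x) then sig_prob lam pp ord0 else 0) +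
  (if (sig_prob lam pp ord_max != 0) && (posterior lam pp ord_max == x) then sig_prob lam pp ord_max else 0).
Proof. by rewrite /post_prob big_mkcond sum2. Qed.

Lemma post_triv x s : mid s -> post_prob lam triv x = G x s.
Proof.
move=> hm; move: (hm); rewrite /mid => /andP[hq /eqP ht].
have s0 : sig_prob lam triv ord0 = 1.
  by rewrite /sig_prob sum2 /triv eqxx !mulr1; case: Hlam => _; rewrite sum2.
have s1 : sig_prob lam triv ord_max = 0.
  by rewrite /sig_prob sum2 /triv ordmax_neq0 !mulr0 addr0.
have ep : posterior lam triv ord0 = posterior lam pi s.
  apply/ffunP => i; rewrite [LHS]ffunE s0 /triv eqxx mulr1 divr1.
  case: (ord2_cases i) => ->; first by rewrite -/(t s) ht.
  by rewrite post1 // ht lam1.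
rewrite post2 s0 s1 eqxx /= ep /G hq /= addr0.
by rewrite oner_neq0.
Qed.

Lemma post_bin x s s' : low s -> high s' ->
  post_prob lam (bin s s') x = a s s' * G x s + (1 - a s s') * G x s'.
Proof.
move=> hl hh; have [q1 q2 d1 d2 [a1 a2]] := lh_facts s s' hl hh.
have hq : q s != 0 by rewrite gt_eqF.
have hq' : q s' != 0 by rewrite gt_eqF.
have ha : a s s' != 0 by rewrite gt_eqF.
have ha' : 1 - a s s' != 0 by rewrite gt_eqF.
have s0 : sig_prob lam (bin s s') ord0 = a s s'.
  rewrite /sig_prob sum2 /bin eqxx.
  move: hq; rewrite qE => hq0; by field.
have s1 : sig_prob lam (bin s s') ord_max = 1 - a s s'.
  rewrite /sig_prob sum2 /bin ordmax_neq0.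
  move: hq'; rewrite qE => hq0; by field.
have e0 : posterior lam (bin s s') ord0 = posterior lam pi s.
  apply/ffunP => i; rewrite !ffunE s0 -/(q s) /bin eqxx; by field; rewrite hq ha.
have e1 : posterior lam (bin s s') ord_max = posterior lam pi s'.
  apply/ffunP => i; rewrite !ffunE s1 -/(q s') /bin ordmax_neq0; by field; rewrite hq' ha'.
rewrite post2 s0 s1 e0 e1 ha ha' /G hq hq' /=.
by case: (_ == x); case: (_ == x); rewrite ?mulr1 ?mulr0.
Qed.


Definition w s s' := q s * q s' * (d s' - d s) / D.

Lemma main_id (g : S -> R) :
  \sum_s (if mid s then q s * g s else 0) +
  \sum_s \sum_s' (if low s && high s' then w s s' * (a s s' * g s + (1 - a s s') * g s') else 0)
  = \sum_s q s * g s.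
Proof.
have e1 s s' : (if low s && high s' then w s s' * (a s s' * g s + (1 - a s s') * g s') else 0)
   = (if low s && high s' then q s * g s * (q s' * d s') / D else 0) +
     (if low s && high s' then q s' * g s' * (q s * - d s) / D else 0).
  case hlh: (low s && high s'); last by rewrite addr0.
  move/andP: hlh => [hl hh]; have [_ _ d1 d2 _] := lh_facts s s' hl hh.
  have hd : d s' - d s != 0 by rewrite gt_eqF // subr_gt0 (lt_trans d1 d2).
  rewrite /w /a; move: (D^-1) => e; by field.
have e2 : \sum_s \sum_s' (if low s && high s' then w s s' * (a s s' * g s + (1 - a s s') * g s') else 0)
  = \sum_s \sum_s' (if low s && high s' then q s * g s * (q s' * d s') / D else 0) +
    \sum_s \sum_s' (if low s && high s' then q s' * g s' * (q s * - d s) / D else 0).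
  rewrite -big_split; apply: eq_bigr => s _; rewrite -big_split; apply: eq_bigr => s' _; exact: e1.
have hA : \sum_s \sum_s' (if low s && high s' then q s * g s * (q s' * d s') / D else 0)
    = \sum_s (if low s then q s * g s else 0).
  apply: eq_bigr => s _; case hl: (low s) => /=; last by rewrite big1.
  have Dp := low_D s hl.
  transitivity (q s * g s * D / D); last by field; rewrite gt_eqF.
  rewrite {2}/D mulr_sumr mulr_suml; apply: eq_bigr => s' _.
  by case: (high s'); rewrite ?mulr0 ?mul0r.
have hB : \sum_s \sum_s' (if low s && high s' then q s' * g s' * (q s * - d s) / D else 0)
    = \sum_s (if high s then q s * g s else 0).
  rewrite exchange_big; apply: eq_bigr => s' _; case hh: (high s') => /=; last first.
    by rewrite big1 // => s _; rewrite andbF.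
  have Dp := high_D s' hh.
  transitivity (q s' * g s' * D / D); last by field; rewrite gt_eqF.
  rewrite -{2}lowsum mulr_sumr mulr_suml; apply: eq_bigr => s _.
  by rewrite andbT; case: (low s); rewrite ?mulr0 ?mul0r.
rewrite e2 hA hB addrA -!big_split; apply: eq_bigr => s _ /=.
rewrite /mid /low /high; have [->|hq] := eqVneq (q s) 0; first by rewrite mul0r /= !addr0.
by case: ltgtP => _ /=; rewrite ?addr0 ?add0r.
Qed.

Lemma final :
  exists (K : nat) (pis : 'I_K -> 'I_2 -> 'I_2 -> R) (F : 'I_K -> R),
    (0 < K)%N /\
    (forall k, is_scheme (pis k)) /\
    is_dist F /\
    (forall x : {ffun 'I_2 -> R}, in_supp lam pi x ->
       post_prob lam pi x = \sum_(k < K) F k * post_prob lam (pis k) x).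
Proof.
pose I := (S + (S * S))%type.
pose pisI (k : I) := match k with inl _ => triv
  | inr (s, s') => if low s && high s' then bin s s' else triv end.
pose FI (k : I) := match k with inl s => if mid s then q s else 0
  | inr (s, s') => if low s && high s' then w s s' else 0 end.
have ep (f : S * S -> R) : \sum_p f p = \sum_s \sum_s' f (s, s').
  by rewrite pair_bigA; apply: eq_bigr => -[].
apply: (@reduce R lam S pi I pisI FI).
- case=> [s|[s s']] /=; first exact: triv_scheme.
  case hlh: (low s && high s'); last exact: triv_scheme.
  by move/andP: hlh => [hl hh]; apply: bin_scheme.
- split.
    case=> [s|[s s']] /=; first by case: (mid s); rewrite ?q_ge0.
    case hlh: (low s && high s') => //.
    move/andP: hlh => [hl hh]; have [q1 q2 d1 d2 _] := lh_facts s s' hl hh.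
    have dd : 0 <= d s' - d s by rewrite subr_ge0 ltW // (lt_trans d1 d2).
    apply: divr_ge0; last exact: D_ge0.
    by apply: mulr_ge0 => //; apply: mulr_ge0; apply: ltW.
  rewrite big_sumType ep /= -sum_q -(eq_bigr _ (fun s _ => mulr1 (q s))) -(main_id (fun _ => 1)).
  congr (_ + _).
    by apply: eq_bigr => s _; rewrite mulr1.
  apply: eq_bigr => s _; apply: eq_bigr => s' _.
  by case: (_ && _); rewrite // !mulr1 addrC subrK mulr1.
- move=> x; rewrite big_sumType ep /= post_pi -(main_id (G x)).
  congr (_ + _).
    apply: eq_bigr => s _; case hm: (mid s); last by rewrite mul0r.
    by rewrite (post_triv x s hm).
  apply: eq_bigr => s _; apply: eq_bigr => s' _.
  case hlh: (low s && high s'); last by rewrite mul0r.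
  by move/andP: hlh => [hl hh]; rewrite (post_bin x s s' hl hh).
Qed.

End Main.

Theorem mainTheorem7 (R : realFieldType) (lam : 'I_2 -> R) (S : finType)
  (pi : 'I_2 -> S -> R) :
  is_dist lam -> is_scheme pi ->
  exists (K : nat) (pis : 'I_K -> 'I_2 -> 'I_2 -> R) (F : 'I_K -> R),
    (0 < K)%N /\
    (forall k, is_scheme (pis k)) /\
    is_dist F /\
    (forall x : {ffun 'I_2 -> R}, in_supp lam pi x ->
       post_prob lam pi x = \sum_(k < K) F k * post_prob lam (pis k) x).
Proof. move=> Hl Hp; exact: (@final R lam S pi Hl Hp). Qed.
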